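(* Let $R$ be a unital commutative Hausdorff topological ring with dense group of units, $E\in\mathrm{TopSMod}_R$ and $\lambda\in\Lambda^\infty$. A subset $U\subset\underline E(\lambda)$ is open in the DeWitt topology if and only if $U=\underline E(\eta)(V)+\underline E(\lambda)^+$ for some open $V\subset E_0$; likewise $U\subset E\otimes\lambda$ is DeWitt-open if and only if $U=V\otimes1+E\otimes\lambda^+$ for some open $V\subset E$. The DeWitt topology on $\underline E(\lambda)$ is a $\lambda_0$-module topology, and the DeWitt topology on $E\otimes\lambda$ is a $\lambda$-module topology.
   Context: $\lambda^n=R[\theta_1,\dots,\theta_n]$ ($n\in\mathbb N$, $\lambda^0=R$) and $\lambda^\infty=R[\theta_i:i\in\mathbb N]$ are Grassmann algebras on odd generators ($\lambda^n=\bigoplus_IR\theta_I$ product topology; $\lambda^\infty$ direct limit topology). $\Lambda^\infty$: category with objects these algebras and morphisms even unital $R$-algebra morphisms. For $\lambda\in\Lambda^\infty$, $\varepsilon:\lambda\to R$ is the morphism killing all $\theta_i$, $\eta:R\to\lambda$ the unit map, $\lambda^+=\ker\varepsilon$. $\mathrm{TopSMod}_R$: Hausdorff graded topological $R$-modules $E=E_0\oplus E_1$. $E\otimes\lambda^N=\prod_{|I|\le N}E\theta_I$, $E\otimes\lambda^\infty=\varinjlim_NE\otimes\lambda^N$; $\underline E(\lambda)=(E\otimes\lambda)_0=E_0\otimes\lambda_0\oplus E_1\otimes\lambda_1$, $\underline E(\varphi)=(\mathrm{id}\otimes\varphi)|$, $\underline E(\lambda)^+=(E\otimes\lambda^+)_0$.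 The DeWitt topology on $\underline E(\lambda)$ (resp. $E\otimes\lambda$) is the coarsest topology for which $\underline E(\varepsilon):\underline E(\lambda)\to E_0$ (resp. $\mathrm{id}\otimes\varepsilon:E\otimes\lambda\to E$) is continuous. A $\lambda_0$-module topology is one making addition and scalar multiplication $\lambda_0\times\underline E(\lambda)\to\underline E(\lambda)$ continuous (with the given topology on $\lambda_0$). *)

(* Defs.v *)
From HB Require Import structures.
From mathcomp Require Import all_boot all_order all_algebra.
From mathcomp Require Import finmap.
From mathcomp Require Import all_classical all_reals topology.

Set Implicit Arguments.
Unset Strict Implicit.
Unset Printing Implicit Defensive.
Import Order.TTheory GRing.Theory.
Local Open Scope classical_set_scope.
Local Open Scope ring_scope.

HB.structure Definition TopZmod := {M of GRing.Zmodule M & Topological M}.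
HB.structure Definition TopComRing := {R of GRing.ComPzRing R & Topological R}.
HB.structure Definition TopLmod (R : pzRingType) := {M of GRing.Lmodule R M & Topological M}.



Definition topology_on (X : Type) (S : set X) (tau : set (set X)) : Prop :=
  [/\ (forall U, tau U -> U `<=` S),
      tau set0, tau S,
      (forall F : set (set X), F `<=` tau -> tau (\bigcup_(U in F) U))
    & (forall U V, tau U -> tau V -> tau (U `&` V))].

(* open sets of the coarsest topology on S for which f : S -> Y is continuous *)
Definition initial_open (X : Type) (Y : topologicalType) (S : set X) (f : X -> Y)
    (U : set X) : Prop :=
  forall tau : set (set X), topology_on S tau ->
    (forall V : set Y, open V -> tau (S `&` f @^-1` V)) -> tau U.

Definition subspace_open (X : Type) (T : set X) (tau : set (set X)) (U : set X) : Prop :=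
  exists W, tau W /\ U = W `&` T.

(* a map f : SA x SB -> SC, jointly continuous for the product topology of
   (SA, tauA) x (SB, tauB) and the topology tauC on SC *)
Definition cont2_on (A B C : Type) (SA : set A) (tauA : set (set A))
    (SB : set B) (tauB : set (set B)) (SC : set C) (tauC : set (set C))
    (f : A -> B -> C) : Prop :=
  (forall a b, SA a -> SB b -> SC (f a b)) /\
  (forall a b, SA a -> SB b -> forall W, tauC W -> W (f a b) ->
     exists UA UB, [/\ tauA UA, tauB UB, UA a, UB b &
       forall a' b', UA a' -> UB b' -> W (f a' b')]).

Definition topological_ring (R : TopComRing.type) : Prop :=
  [/\ continuous (fun p : R * R => p.1 + p.2),
      continuous (fun x : R => - x)
    & continuous (fun p : R * R => p.1 * p.2)].

Definition units_set (R : TopComRing.type) : set R := [set x | exists y, x * y = 1].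

Definition topological_module (R : TopComRing.type) (M : TopLmod.type R) : Prop :=
  continuous (fun p : M * M => p.1 + p.2) /\
  continuous (fun p : R * M => p.1 *: p.2).

(* objects: lambda^n (Fin n) and lambda^infty (Inf) *)
Inductive GrObj := Fin of nat | Inf.

(* I (a finite set of generator indices) indexes a monomial theta_I of the object *)
Definition idx_ok (o : GrObj) (I : {fset nat}) : Prop :=
  match o with Fin n => forall i, i \in I -> (i < n)%N | Inf => True end.

Definition even_idx (I : {fset nat}) : bool := ~~ odd #|` I|%fset.

(* sign of theta_I theta_J = sign * theta_(I u J), for disjoint I J *)
Definition gsign (R : TopComRing.type) (I J : {fset nat}) : R :=
  (-1) ^+ (\sum_(i <- enum_fset I) count (fun j => (j < i)%N) (enum_fset J))%N.

Section Grassmann.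
Variables (R : TopComRing.type) (E0 E1 : TopLmod.type R).

(* elements of lambda^n / lambda^infty: coefficient families a = sum_I a_I theta_I *)
Definition Lam := {fset nat} -> R.
(* elements of E (x) lambda, with E = E0 (+) E1 *)
Definition EL := {fset nat} -> E0 * E1.

Definition lam_set (o : GrObj) : set Lam :=
  [set a | (forall I, ~ idx_ok o I -> a I = 0) /\ finite_set [set I | a I != 0]].

Definition lam0_set (o : GrObj) : set Lam :=
  [set a | lam_set o a /\ forall I, ~~ even_idx I -> a I = 0].

(* product topology on lambda^n, direct limit topology on lambda^infty *)
Definition lam_open (o : GrObj) (U : set Lam) : Prop :=
  let fin_open n (U : set Lam) :=
    U `<=` lam_set (Fin n) /\
    forall a, U a -> exists V : {fset nat} -> set R,
      (forall I, idx_ok (Fin n) I -> open (V I) /\ V I (a I)) /\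
      (forall b, lam_set (Fin n) b -> (forall I, idx_ok (Fin n) I -> V I (b I)) -> U b) in
  match o with
  | Fin n => fin_open n U
  | Inf => U `<=` lam_set Inf /\ forall N, fin_open N (U `&` lam_set (Fin N))
  end.

Definition lam0_open (o : GrObj) : set (set Lam) := subspace_open (lam0_set o) (lam_open o).

Definition lam_mul (a b : Lam) : Lam :=
  fun K => \sum_(I <- enum_fset (fpowerset K)) gsign R I (K `\` I)%fset * a I * b (K `\` I)%fset.

Definition EL_set (o : GrObj) : set EL :=
  [set x | (forall I, ~ idx_ok o I -> x I = 0) /\ finite_set [set I | x I != 0]].

(* underline E (lambda) = (E (x) lambda)_0 *)
Definition El_set (o : GrObj) : set EL :=
  [set x | EL_set o x /\ forall I, if even_idx I then (x I).2 = 0 else (x I).1 = 0].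

Definition EL_plus (o : GrObj) : set EL := [set x | EL_set o x /\ x fset0%fset = 0].
Definition El_plus (o : GrObj) : set EL := [set x | El_set o x /\ x fset0%fset = 0].

Definition EL_add (x y : EL) : EL := fun I => x I + y I.

(* action of lambda on E (x) lambda: a . (e (x) b) = e (x) (a b) *)
Definition EL_act (a : Lam) (x : EL) : EL :=
  fun K => \sum_(I <- enum_fset (fpowerset K))
     (gsign R I (K `\` I)%fset * a I) *: x (K `\` I)%fset.

Definition EL_eps (x : EL) : E0 * E1 := x fset0.
Definition El_eps (x : EL) : E0 := (x fset0).1.

Definition EL_one (v : E0 * E1) : EL := fun I => if I == fset0 then v else 0.
Definition El_eta (v : E0) : EL := fun I => if I == fset0 then (v, 0) else 0.

Definition El_DeWitt (o : GrObj) : set (set EL) := initial_open (El_set o) El_eps.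
Definition EL_DeWitt (o : GrObj) : set (set EL) := initial_open (EL_set o) EL_eps.

End Grassmann.

(* Main.v *)
Require Import Defs.
From HB Require Import structures.
From mathcomp Require Import all_boot all_order all_algebra.
From mathcomp Require Import finmap.
From mathcomp Require Import all_classical all_reals topology.
Local Open Scope classical_set_scope.
Local Open Scope ring_scope.
Import GRing.Theory.

Lemma prod_open_nbhs (X Y : topologicalType) (W : set (X * Y)) x y :
  open W -> W (x, y) -> exists P Q, [/\ open P, open Q, P x, Q y & P `*` Q `<=` W].
Proof.
rewrite openE => oW Wxy.
have := oW _ Wxy; rewrite /interior /=.
move=> [[P Q] /= [nP nQ] sPQ].
move: nP; rewrite nbhsE => -[P' [oP' P'x] sP'].
move: nQ; rewrite nbhsE => -[Q' [oQ' Q'y] sQ'].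
exists P', Q'; split => // -[a b] [/= /sP' Pa /sQ' Qb]; exact: (sPQ (a, b)).
Qed.

Lemma openX' (X Y : topologicalType) (P : set X) (Q : set Y) :
  open P -> open Q -> open (P `*` Q).
Proof.
move=> oP oQ; rewrite openE => -[a b] [/= Pa Qb]; rewrite /interior /=.
exists (P, Q) => //=; split; apply: open_nbhs_nbhs; split => //.
Qed.

Lemma cont2_open (X Y Z : topologicalType) (g : X * Y -> Z) : continuous g ->
  forall a b (W : set Z), open W -> W (g (a, b)) ->
  exists A B, [/\ open A, open B, A a, B b &
     forall a' b', A a' -> B b' -> W (g (a', b'))].
Proof.
move=> cg a b W oW Wg.
have nW : nbhs (g (a, b)) W by apply: open_nbhs_nbhs; split.
have := cg (a, b) _ nW; rewrite /= => -[[P Q] /= [nP nQ] sPQ].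
move: nP; rewrite nbhsE => -[P' [oP' P'x] sP'].
move: nQ; rewrite nbhsE => -[Q' [oQ' Q'y] sQ'].
exists P', Q'; split => // a' b' Pa Qb; apply: (sPQ (a', b')); split => /=; auto.
Qed.


Lemma initial_openP (X : Type) (Y : topologicalType) (S : set X) (f : X -> Y)
  (U : set X) :
  initial_open S f U <-> exists V, open V /\ U = S `&` f @^-1` V.
Proof.
split; last first.
  by move=> [V [oV ->]] tau _ H; apply: H.
move=> H; apply: (H (fun U => exists V, open V /\ U = S `&` f @^-1` V)) => [|V oV]; last by exists V.
split.
- by move=> _ [V [_ ->]] x [].
- by exists set0; split; [exact: open0|rewrite preimage_set0 setI0].
- by exists setT; split; [exact: openT|rewrite preimage_setT setIT].
- move=> F HF.
  exists (\bigcup_(V in [set V | open V /\ F (S `&` f @^-1` V)]) V); split.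
    by apply: bigcup_open => V [].
  apply/seteqP; split.
    move=> x [U0 FU Ux]; have [V [oV EU]] := HF _ FU.
    move: Ux; rewrite EU => -[Sx Vx]; split => //.
    by exists V => //; split => //; rewrite -EU.
  move=> x [Sx [V [oV FV] Vx]]; by exists (S `&` f @^-1` V).
- move=> U1 U2 [V1 [o1 ->]] [V2 [o2 ->]]; exists (V1 `&` V2); split.
    exact: openI.
  by rewrite preimage_setI setIACA setIid.
Qed.


Section G.
Variables (R : TopComRing.type) (E0 E1 : TopLmod.type R).
Local Notation EL := (EL E0 E1).
Implicit Types (x y : EL) (a : Lam R).

Lemma EL_act_zero a x K :
  (forall I, (I `<=` K)%fset -> a I = 0 \/ x (K `\` I)%fset = 0) -> EL_act a x K = 0.
Proof.
move=> H; rewrite /EL_act big1_seq // => I; rewrite /= fpowersetE => sIK.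
by case: (H I sIK) => ->; rewrite ?mulr0 ?scale0r ?scaler0.
Qed.

Lemma EL_act_nz a x K : EL_act a x K != 0 ->
  exists I, [/\ (I `<=` K)%fset, a I != 0 & x (K `\` I)%fset != 0].
Proof.
move=> H; case: (pselect (exists I, [/\ (I `<=` K)%fset, a I != 0 & x (K `\` I)%fset != 0])) => // H'.
exfalso; move/eqP: H; apply; apply: EL_act_zero => I sIK.
case: (eqVneq (a I) 0) => [|aI]; [by left|right].
by case: (eqVneq (x (K `\` I)%fset) 0) => // xK; exfalso; apply: H'; exists I.
Qed.

Lemma EL_act_ind (P : E0 * E1 -> Prop) a x K : P 0 ->
  (forall u v, P u -> P v -> P (u + v)) ->
  (forall I, (I `<=` K)%fset -> a I != 0 -> P (x (K `\` I)%fset)) ->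
  (forall c u, P u -> P (c *: u)) ->
  P (EL_act a x K).
Proof.
move=> P0 PD Px PZ; rewrite /EL_act big_seq; apply: big_ind => // I.
rewrite /= fpowersetE => sIK.
case: (eqVneq (a I) 0) => [->|aI]; first by rewrite mulr0 scale0r.
exact/PZ/Px.
Qed.

Lemma EL_act0 a x : EL_act a x fset0 = a fset0 *: x fset0.
Proof.
rewrite /EL_act.
have -> : fpowerset (@fset0 nat) = [fset fset0]%fset.
  by apply/fsetP => B; rewrite fpowersetE fsubset0 inE.
rewrite big_seq_fset1 /= fsetD0.
by rewrite /gsign big_seq_fset0 expr0 mul1r.
Qed.
End G.


Section G2.
Variables (R : TopComRing.type) (E0 E1 : TopLmod.type R).
Local Notation EL := (EL E0 E1).
Implicit Types (x y : EL) (a : Lam R).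

Lemma idx_ok_split o (I K : {fset nat}) : (I `<=` K)%fset ->
  idx_ok o I -> idx_ok o (K `\` I)%fset -> idx_ok o K.
Proof.
case: o => //= n sIK h1 h2 i iK.
case: (boolP (i \in I)) => iI; first exact: h1.
by apply: h2; rewrite in_fsetD iI iK.
Qed.

Lemma fsetU_DK (I K : {fset nat}) : (I `<=` K)%fset -> (I `|` (K `\` I))%fset = K.
Proof.
move=> sIK; apply/fsetP => i; rewrite in_fsetU in_fsetD.
case: (boolP (i \in I)) => iI /=; last by [].
by rewrite (fsubsetP sIK).
Qed.

Lemma even_idx_D (I K : {fset nat}) : (I `<=` K)%fset -> even_idx I ->
  even_idx (K `\` I)%fset = even_idx K.
Proof.
move=> sIK; rewrite /even_idx cardfsDS // oddB ?fsubset_leq_card //.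
by move/negbTE => ->; rewrite addbF.
Qed.

Lemma supp_add x y : [set I | EL_add x y I != 0] `<=`
  [set I | x I != 0] `|` [set I | y I != 0].
Proof.
move=> I /=; rewrite /EL_add; case: (eqVneq (x I) 0) => [->|]; last by left.
by rewrite add0r; right.
Qed.

Lemma EL_set_add o x y : EL_set o x -> EL_set o y -> EL_set o (EL_add x y).
Proof.
move=> [zx fx] [zy fy]; split.
  by move=> I nI; rewrite /EL_add zx // zy // addr0.
by apply: sub_finite_set (supp_add x y) _; rewrite finite_setU.
Qed.

Lemma El_set_add o x y : El_set o x -> El_set o y -> El_set o (EL_add x y).
Proof.
move=> [sx px] [sy py]; split; first exact: EL_set_add.
move=> I; have := px I; have := py I; rewrite /EL_add.
by case: ifP => _ /= -> ->; rewrite addr0.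
Qed.

Lemma EL_set_act o a x : lam_set o a -> EL_set o x -> EL_set o (EL_act a x).
Proof.
move=> [za fa] [zx fx]; split.
  move=> K nK; apply: EL_act_zero => I sIK.
  case: (pselect (idx_ok o I)) => hI; last by left; apply: za.
  case: (pselect (idx_ok o (K `\` I)%fset)) => hD; last by right; apply: zx.
  by exfalso; apply: nK; exact: idx_ok_split hI hD.
apply: sub_finite_set (finite_image2 fsetU fa fx).
move=> K /= /EL_act_nz [I [sIK aI xI]].
by exists I => //; exists (K `\` I)%fset => //; rewrite fsetU_DK.
Qed.

Lemma El_set_act o a x : lam0_set o a -> El_set o x -> El_set o (EL_act a x).
Proof.
move=> [la pa] [sx px]; split; first exact: EL_set_act.
have evI I : a I != 0 -> even_idx I.
  by move=> aI; apply: contraNT aI => /pa ->.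
move=> K; case: ifP => eK.
- apply: (@EL_act_ind _ _ _ (fun p => p.2 = 0)) => //.
  + by move=> u v /= -> ->; rewrite addr0.
  + move=> I sIK /evI eI; have := px (K `\` I)%fset.
    by rewrite even_idx_D // eK.
  + by move=> c u /= ->; rewrite scaler0.
- apply: (@EL_act_ind _ _ _ (fun p => p.1 = 0)) => //.
  + by move=> u v /= -> ->; rewrite addr0.
  + move=> I sIK /evI eI; have := px (K `\` I)%fset.
    by rewrite even_idx_D // eK.
  + by move=> c u /= ->; rewrite scaler0.
Qed.

Lemma EL_set_one o (v : E0 * E1) : EL_set o (EL_one v).
Proof.
split.
  move=> I nI; rewrite /EL_one; case: eqP => // eI; exfalso; apply: nI.
  by rewrite eI; case: o => //= n i; rewrite in_fset0.
apply: sub_finite_set (finite_set1 (@fset0 nat)) => I /=.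
by rewrite /EL_one; case: (I =P fset0) => // _; rewrite eqxx.
Qed.

Lemma El_set_eta o (v : E0) : El_set o (El_eta E1 v).
Proof.
split; first split.
- move=> I nI; rewrite /El_eta; case: (I =P fset0) => // eI; exfalso; apply: nI.
  by rewrite eI; case: o => //= n i; rewrite in_fset0.
- apply: sub_finite_set (finite_set1 (@fset0 nat)) => I /=.
  by rewrite /El_eta; case: (I =P fset0) => // _; rewrite eqxx.
- move=> I; rewrite /El_eta; case: (I =P fset0) => [->|_] /=.
    by [].
  by case: (even_idx I).
Qed.

End G2.


Section G3.
Variables (R : TopComRing.type) (E0 E1 : TopLmod.type R).
Local Notation EL := (EL E0 E1).
Implicit Types (x y : EL) (a : Lam R).

Lemma EL_pre o (V : set (E0 * E1)) : EL_set o `&` (@EL_eps R E0 E1) @^-1` V =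
  [set x | exists v, V v /\ exists y, EL_plus o y /\ x = EL_add (EL_one v) y].
Proof.
apply/seteqP; split.
- move=> x [sx Vx]; exists (x fset0); split => //.
  exists (fun I => if I == fset0 then 0 else x I); split.
    split; last by rewrite eqxx.
    split.
      by move=> I nI; case: (I =P fset0) => // _; exact: sx.1.
    apply: sub_finite_set sx.2 => I /=.
    by case: (I =P fset0) => // _; rewrite eqxx.
  apply: funext => I; rewrite /EL_add /EL_one.
  by case: (I =P fset0) => [->|_]; rewrite ?addr0 ?add0r.
- move=> x [v [Vv [y [[sy y0] ->]]]]; split.
    by apply: EL_set_add => //; exact: EL_set_one.
  by rewrite /= /EL_eps /EL_add /EL_one /= y0 addr0.
Qed.

Lemma El_pre o (V : set E0) : El_set o `&` (@El_eps R E0 E1) @^-1` V =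
  [set x | exists v, V v /\ exists y, El_plus o y /\ x = EL_add (El_eta E1 v) y].
Proof.
apply/seteqP; split.
- move=> x [sx Vx]; exists (x fset0).1; split => //.
  exists (fun I => if I == fset0 then 0 else x I); split.
    split; last by rewrite eqxx.
    split; first split.
    + by move=> I nI; case: (I =P fset0) => // _; exact: sx.1.1.
    + apply: sub_finite_set sx.1.2 => I /=.
      by case: (I =P fset0) => // _; rewrite eqxx.
    + move=> I; case: (I =P fset0) => _; first by case: (even_idx I).
      exact: sx.2.
  apply: funext => I; rewrite /EL_add /El_eta.
  case: (I =P fset0) => [->|_]; rewrite ?addr0 ?add0r //.
  have := sx.2 fset0 => /= h.
  by case: (x fset0) h => ? ? /= ->.
- move=> x [v [Vv [y [[sy y0] ->]]]]; split.
    by apply: El_set_add => //; exact: El_set_eta.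
  by rewrite /= /El_eps /EL_add /El_eta /= y0 addr0.
Qed.

Lemma lam_open_eps o (A : set R) : open A ->
  lam_open o (lam_set o `&` [set a | A (a fset0)]).
Proof.
have i0 n : idx_ok (Fin n) fset0 by move=> i; rewrite in_fset0.
move=> oA; case: o => [n|] /=.
- split; first by move=> ? [].
  move=> a [la Aa]; exists (fun I => if I == fset0 then A else setT); split.
    move=> I _; case: (I =P fset0) => [->|_]; split => //; exact: openT.
  move=> b lb Hb; split => //; have := Hb fset0 (i0 n); by rewrite ?eqxx.
- split; first by move=> ? [].
  move=> N; split; first by move=> ? [].
  move=> a [[la Aa] lN]; exists (fun I => if I == fset0 then A else setT); split.
    move=> I _; case: (I =P fset0) => [->|_]; split => //; exact: openT.
  move=> b lb Hb; split => //; split.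
    by split; [move=> I []|exact: lb.2].
  have := Hb fset0 (i0 N); by rewrite ?eqxx.
Qed.

End G3.


Section G4.
Variables (R : TopComRing.type) (E0 E1 : TopLmod.type R).
Hypotheses (tm0 : topological_module E0) (tm1 : topological_module E1).

Lemma cont_add_prod (p q : E0 * E1) (W : set (E0 * E1)) : open W -> W (p + q) ->
  exists A B, [/\ open A, open B, A p, B q &
    forall p' q', A p' -> B q' -> W (p' + q')].
Proof.
case: p => p0 p1; case: q => q0 q1 oW Wpq.
have [P [Q [oP oQ Pp Qq sPQ]]] := @prod_open_nbhs _ _ W _ _ oW (Wpq : W (p0 + q0, p1 + q1)).
have [A0 [B0 [oA0 oB0 A0p B0q h0]]] := cont2_open _ _ _ _ tm0.1 p0 q0 _ oP Pp.
have [A1 [B1 [oA1 oB1 A1p B1q h1]]] := cont2_open _ _ _ _ tm1.1 p1 q1 _ oQ Qq.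
exists (A0 `*` A1), (B0 `*` B1); split; try exact: openX'; [by []|by []|].
move=> [a0 a1] [b0 b1] [/= ? ?] [/= ? ?]; apply: (sPQ (_, _)); split.
  exact: (h0 a0 b0).
exact: (h1 a1 b1).
Qed.

Lemma cont_scale_prod (r : R) (p : E0 * E1) (W : set (E0 * E1)) : open W -> W (r *: p) ->
  exists A B, [/\ open A, open B, A r, B p &
    forall r' p', A r' -> B p' -> W (r' *: p')].
Proof.
case: p => p0 p1 oW Wpq.
have [P [Q [oP oQ Pp Qq sPQ]]] := @prod_open_nbhs _ _ W _ _ oW (Wpq : W (r *: p0, r *: p1)).
have [A0 [B0 [oA0 oB0 A0p B0q h0]]] := cont2_open _ _ _ _ tm0.2 r p0 _ oP Pp.
have [A1 [B1 [oA1 oB1 A1p B1q h1]]] := cont2_open _ _ _ _ tm1.2 r p1 _ oQ Qq.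
exists (A0 `&` A1), (B0 `*` B1); split; try exact: openX'; try exact: openI.
- by [].
- by [].
move=> r' [b0 b1] [? ?] [/= ? ?]; apply: (sPQ (_, _)); split.
  exact: (h0 r' b0).
exact: (h1 r' b1).
Qed.
End G4.


Theorem lemma2p5 (R : TopComRing.type) (E0 E1 : TopLmod.type R) (o : GrObj) :
  topological_ring R -> hausdorff_space R -> dense (@units_set R) ->
  topological_module E0 -> topological_module E1 ->
  hausdorff_space E0 -> hausdorff_space E1 ->
  [/\ (forall U : set (EL E0 E1), U `<=` El_set o ->
         (El_DeWitt o U <->
          exists V : set E0, open V /\
            U = [set x | exists v, V v /\
                   exists y, El_plus o y /\ x = EL_add (El_eta E1 v) y])),
      (forall U : set (EL E0 E1), U `<=` EL_set o ->
         (EL_DeWitt o U <->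
          exists V : set (E0 * E1), open V /\
            U = [set x | exists v, V v /\
                   exists y, EL_plus o y /\ x = EL_add (EL_one v) y])),
      cont2_on (El_set o) (El_DeWitt o) (El_set o) (El_DeWitt o)
               (El_set o) (El_DeWitt o) (@EL_add R E0 E1) /\
      cont2_on (lam0_set o) (lam0_open o) (El_set o) (El_DeWitt o)
               (El_set o) (El_DeWitt o) (@EL_act R E0 E1)
    & cont2_on (EL_set o) (EL_DeWitt o) (EL_set o) (EL_DeWitt o)
               (EL_set o) (EL_DeWitt o) (@EL_add R E0 E1) /\
      cont2_on (lam_set o) (lam_open o) (EL_set o) (EL_DeWitt o)
               (EL_set o) (EL_DeWitt o) (@EL_act R E0 E1)].
Proof.
move=> _ _ _ tm0 tm1 _ _.
split.
- move=> U _; rewrite /El_DeWitt initial_openP; split.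
    by move=> [V [oV ->]]; exists V; split => //; exact: El_pre.
  by move=> [V [oV ->]]; exists V; split => //; rewrite El_pre.
- move=> U _; rewrite /EL_DeWitt initial_openP; split.
    by move=> [V [oV ->]]; exists V; split => //; exact: EL_pre.
  by move=> [V [oV ->]]; exists V; split => //; rewrite EL_pre.
- split.
  + split; first by move=> a b Sa Sb; apply: El_set_add.
    move=> a b Sa Sb W; rewrite /El_DeWitt initial_openP => -[V [oV ->]] [_ Vab].
    have [A [B [oA oB Aa Bb h]]] :=
      cont2_open _ _ _ _ tm0.1 (a fset0).1 (b fset0).1 _ oV Vab.
    exists (El_set o `&` @El_eps R E0 E1 @^-1` A),
           (El_set o `&` @El_eps R E0 E1 @^-1` B); split.
    * by rewrite /El_DeWitt initial_openP; exists A.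
    * by rewrite /El_DeWitt initial_openP; exists B.
    * by split.
    * by split.
    * move=> a' b' [Sa' Aa'] [Sb' Bb']; split; first by apply: El_set_add.
      exact: (h _ _ Aa' Bb').
  + split; first by move=> a x Sa Sx; apply: El_set_act.
    move=> a x Sa Sx W; rewrite /El_DeWitt initial_openP => -[V [oV ->]] [_ Vax].
    move: Vax; rewrite /= /El_eps EL_act0 /= => Vax.
    have [A [B [oA oB Aa Bb h]]] :=
      cont2_open _ _ _ _ tm0.2 (a fset0) (x fset0).1 _ oV Vax.
    exists (lam0_set o `&` [set a | A (a fset0)]),
           (El_set o `&` @El_eps R E0 E1 @^-1` B); split.
    * exists (lam_set o `&` [set a | A (a fset0)]); split.
        exact: lam_open_eps.
      apply/seteqP; split => b.
        by move=> [l0 Ab]; split => //; split => //; exact: l0.1.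
      by move=> [[_ Ab] l0].
    * by rewrite /El_DeWitt initial_openP; exists B.
    * by split.
    * by split.
    * move=> a' x' [l0 Aa'] [Sx' Bx']; split; first by apply: El_set_act.
      rewrite /= /El_eps EL_act0 /=; exact: (h _ _ Aa' Bx').
- split.
  + split; first by move=> a b Sa Sb; apply: EL_set_add.
    move=> a b Sa Sb W; rewrite /EL_DeWitt initial_openP => -[V [oV ->]] [_ Vab].
    have [A [B [oA oB Aa Bb h]]] := @cont_add_prod R E0 E1 tm0 tm1 (a fset0) (b fset0) _ oV Vab.
    exists (EL_set o `&` @EL_eps R E0 E1 @^-1` A),
           (EL_set o `&` @EL_eps R E0 E1 @^-1` B); split.
    * by rewrite /EL_DeWitt initial_openP; exists A.
    * by rewrite /EL_DeWitt initial_openP; exists B.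
    * by split.
    * by split.
    * move=> a' b' [Sa' Aa'] [Sb' Bb']; split; first by apply: EL_set_add.
      exact: (h _ _ Aa' Bb').
  + split; first by move=> a x Sa Sx; apply: EL_set_act.
    move=> a x Sa Sx W; rewrite /EL_DeWitt initial_openP => -[V [oV ->]] [_ Vax].
    move: Vax; rewrite /= /EL_eps EL_act0 => Vax.
    have [A [B [oA oB Aa Bb h]]] := @cont_scale_prod R E0 E1 tm0 tm1 (a fset0) (x fset0) _ oV Vax.
    exists (lam_set o `&` [set a | A (a fset0)]),
           (EL_set o `&` @EL_eps R E0 E1 @^-1` B); split.
    * exact: lam_open_eps.
    * by rewrite /EL_DeWitt initial_openP; exists B.
    * by split.
    * by split.
    * move=> a' x' [l0 Aa'] [Sx' Bx']; split; first by apply: EL_set_act.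
      rewrite /= /EL_eps EL_act0; exact: (h _ _ Aa' Bx').
Qed.
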